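(* In the setting described in the context, for every $k\in\{1,\dots,p\}$ the function $\delta_k$ belongs to $\mathcal F$, and for every $k\in\{2,\dots,p\}$ the function $f_k$ belongs to $\mathcal F$.
   Context: Let $p\ge1$, $\bar{\boldsymbol y}\in\mathbb R^p$, weights $n_1,\dots,n_p\ge1$, and $\tilde\lambda_0,\tilde\lambda\ge0$. For $i\in[p]$ let $e_i(x)=-\frac{n_i}{2}(x-\bar y_i)^2+\tilde\lambda_0\mathbf 1(x=0)$, $x\in\mathbb R$ ($\mathbf 1$ the indicator). Define recursively $\delta_1=e_1$ and, for $k=2,\dots,p$, $f_k(b)=\sup_{\tilde b\in\mathbb R}\big[\delta_{k-1}(\tilde b)-\tilde\lambda\mathbf 1(b\ne\tilde b)\big]$ (equivalently $\max\{\delta_{k-1}(b),\sup_{\tilde b}\delta_{k-1}(\tilde b)-\tilde\lambda\}$) and $\delta_k=e_k+f_k$. Let $\mathcal Q$ be the set of piecewise quadratic functions $x\mapsto\sum_{i=1}^{m+1}\mathbf 1(x\in(x_{i-1},x_i])(a_ix^2+b_ix+c_i)$ with $m\ge0$, $-\infty=x_0\le x_1\le\dots\le x_{m+1}=\infty$ and real $a_i,b_i,c_i$. Let $\mathcal S$ be the set of positive spike functions $x\mapsto\sum_{i=1}^{m}s_i\mathbf 1(x=x_i)$ with $m\ge0$, $x_i\in\mathbb R$, $s_i>0$. Let $\mathcal F=\{Q+S:Q\in\mathcal Q,S\in\mathcal S\}$. *)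

(* Defs.v *)
From HB Require Import structures.
From mathcomp Require Import all_boot all_order all_algebra.
From mathcomp Require Import all_classical all_reals.
From mathcomp Require Import ereal.
Set Implicit Arguments. Unset Strict Implicit. Unset Printing Implicit Defensive.
Import Order.TTheory GRing.Theory Num.Theory.
Local Open Scope ring_scope.
Local Open Scope classical_set_scope.

Section Defs.
Variable R : realType.

Definition ind (b : bool) : R := (b%:R : R).

(* e_i(x) = -(n_i/2)(x - ybar_i)^2 + lam0 * 1(x = 0) ; indices i are 1-based *)
Definition efun (ybar : nat -> R) (n : nat -> nat) (lam0 : R) (i : nat) (x : R) : R :=
  - ((n i)%:R / 2) * (x - ybar i) ^+ 2 + lam0 * ind (x == 0).

Definition fstep (lam : R) (g : R -> R) (b : R) : R :=
  sup (range (fun bt : R => g bt - lam * ind (b != bt))).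

(* delta_k for k >= 1 (delta 0 is a dummy value, never used) *)
Fixpoint delta (ybar : nat -> R) (n : nat -> nat) (lam0 lam : R) (k : nat)
  : R -> R :=
  match k with
  | 0 => fun _ => 0
  | 1 => efun ybar n lam0 1
  | S ((S _) as k') => fun x =>
      efun ybar n lam0 k x + fstep lam (delta ybar n lam0 lam k') x
  end.

(* f_k = fstep (delta_{k-1}) , used for k >= 2 *)
Definition fk (ybar : nat -> R) (n : nat -> nat) (lam0 lam : R) (k : nat)
  : R -> R := fstep lam (delta ybar n lam0 lam k.-1).

Definition piecewise_quadratic (g : R -> R) : Prop :=
  exists (m : nat) (xs : nat -> \bar R) (a b c : nat -> R),
    [/\ xs 0 = -oo%E, xs m.+1 = +oo%E,
        (forall i, (i <= m)%N -> (xs i <= xs i.+1)%E) &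
        forall x : R, g x = \sum_(1 <= i < m.+2)
          ind ((xs i.-1 < x%:E)%E && (x%:E <= xs i)%E) *
          (a i * x ^+ 2 + b i * x + c i)].

Definition positive_spikes (g : R -> R) : Prop :=
  exists (m : nat) (xs s : nat -> R),
    (forall i, (1 <= i <= m)%N -> 0 < s i) /\
    forall x : R, g x = \sum_(1 <= i < m.+1) s i * ind (x == xs i).

Definition classF (g : R -> R) : Prop :=
  exists Q S : R -> R, [/\ piecewise_quadratic Q, positive_spikes S &
                          forall x, g x = Q x + S x].
End Defs.

(* Main.v *)
Require Import Defs.
From HB Require Import structures.
From mathcomp Require Import all_boot all_order all_algebra.
From mathcomp Require Import all_classical all_reals ereal.
From mathcomp Require Import ring lra zify.
Import Order.TTheory GRing.Theory Num.Theory.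
Local Open Scope ring_scope.
Set Implicit Arguments. Unset Strict Implicit. Unset Printing Implicit Defensive.

Lemma indT (R : realType) (b : bool) : b -> ind R b = 1.
Proof. by move=> ->. Qed.
Lemma indF (R : realType) (b : bool) : ~~ b -> ind R b = 0.
Proof. by move/negbTE => ->. Qed.
Lemma ind01 (R : realType) (b : bool) : ind R b = 0 \/ ind R b = 1.
Proof. by case: b; [right|left]. Qed.

Definition qv {R : realType} (q : R * R * R) (x : R) : R :=
  q.1.1 * x ^+ 2 + q.1.2 * x + q.2.
Definition qadd {R : realType} (q r : R * R * R) : R * R * R :=
  (q.1.1 + r.1.1, q.1.2 + r.1.2, q.2 + r.2).
Definition qopp {R : realType} (q : R * R * R) : R * R * R :=
  (- q.1.1, - q.1.2, - q.2).

Lemma qvD (R : realType) q r (x : R) : qv (qadd q r) x = qv q x + qv r x.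
Proof. rewrite /qv /qadd /=; ring. Qed.
Lemma qvN (R : realType) q (x : R) : qv (qopp q) x = - qv q x.
Proof. rewrite /qv /qopp /=; ring. Qed.

Definition PQf {R : realType} (q0 : R * R * R) (L : seq (R * (R * R * R))) (x : R) : R :=
  qv q0 x + \sum_(u <- L) ind R (u.1 < x) * qv u.2 x.
Definition PQ {R : realType} (g : R -> R) : Prop :=
  exists q0 L, forall x, g x = PQf q0 L x.
Definition NS {R : realType} (g : R -> R) : Prop :=
  exists L : seq (R * R), all (fun u => 0 <= u.2) L /\
     forall x, g x = \sum_(u <- L) u.2 * ind R (x == u.1).
Definition GG {R : realType} (g : R -> R) : Prop :=
  exists Q S, [/\ PQ Q, NS S & forall x, g x = Q x + S x].

Lemma PQ_ext (R : realType) (f g : R -> R) : (forall x, f x = g x) -> PQ f -> PQ g.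
Proof. by move=> e [q0 [L H]]; exists q0, L => x; rewrite -e. Qed.

Lemma PQ_quad (R : realType) q : PQ (qv (R:=R) q).
Proof. by exists q, [::] => x; rewrite /PQf big_nil addr0. Qed.

Lemma PQ_const (R : realType) (c : R) : PQ (fun _ => c).
Proof.
apply: (PQ_ext _ (PQ_quad (0, 0, c))) => x; rewrite /qv /=; ring.
Qed.

Lemma PQ_add (R : realType) (f g : R -> R) : PQ f -> PQ g -> PQ (fun x => f x + g x).
Proof.
move=> [q1 [L1 H1]] [q2 [L2 H2]]; exists (qadd q1 q2), (L1 ++ L2) => x.
rewrite H1 H2 /PQf big_cat qvD /=; ring.
Qed.

Lemma PQ_opp (R : realType) (f : R -> R) : PQ f -> PQ (fun x => - f x).
Proof.
move=> [q [L H]]; exists (qopp q), [seq (u.1, qopp u.2) | u <- L] => x.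
rewrite H /PQf big_map qvN opprD; congr (_ + _).
rewrite -sumrN; apply: eq_bigr => u _ /=; rewrite qvN; ring.
Qed.

Lemma PQ_sub (R : realType) (f g : R -> R) : PQ f -> PQ g -> PQ (fun x => f x - g x).
Proof. by move=> Hf Hg; apply: PQ_add => //; apply: PQ_opp. Qed.

Definition mx {R : realType} (t u : R) := if t <= u then u else t.

Lemma ind_mx (R : realType) (t u x : R) :
  ind R (t < x) * ind R (u < x) = ind R (mx t u < x).
Proof.
rewrite /mx; case: (lerP t u) => htu.
  case: (ltrP u x) => hux; last by rewrite /ind mulr0.
  by rewrite !indT ?mulr1 //; apply: le_lt_trans hux.
case: (ltrP t x) => htx; last by rewrite /ind mul0r.
by rewrite !indT ?mulr1 //; apply: lt_trans htx.
Qed.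

Lemma PQ_ind (R : realType) (t : R) (f : R -> R) :
  PQ f -> PQ (fun x => ind R (t < x) * f x).
Proof.
move=> [q [L H]]; exists (0, 0, 0), ((t, q) :: [seq (mx t u.1, u.2) | u <- L]) => x.
rewrite H /PQf big_cons big_map mulrDr mulr_sumr.
have -> : qv (0, 0, 0) x = 0 by rewrite /qv /=; ring.
rewrite add0r; congr (_ + _); apply: eq_bigr => u _ /=; rewrite mulrA ind_mx //.
Qed.

Lemma PQ_ind_le (R : realType) (t : R) (f : R -> R) :
  PQ f -> PQ (fun x => (1 - ind R (t < x)) * f x).
Proof.
move=> Hf; apply: (PQ_ext (f := fun x => f x - ind R (t < x) * f x)).
  by move=> x; ring.
by apply: PQ_sub => //; apply: PQ_ind.
Qed.


Lemma max_shift (R : realType) (y C : R) : Num.max y C = C + Num.max (y - C) 0.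
Proof.
case/orP: (le_total y C) => h.
  by rewrite max_r // max_r ?addr0 // subr_le0.
by rewrite max_l ?max_l ?subr_ge0 //; ring.
Qed.

Lemma max_neg (R : realType) (y : R) : Num.max y 0 = y + Num.max (- y) 0.
Proof.
case/orP: (le_total y 0) => h.
  by rewrite max_r // max_l ?oppr_ge0 //; ring.
by rewrite max_l // max_r ?addr0 // oppr_le0.
Qed.

Lemma PQ_pos_neg (R : realType) (f : R -> R) : PQ f -> PQ (fun x => Num.max (- f x) 0) ->
  PQ (fun x => Num.max (f x) 0).
Proof.
move=> Hf Hn; apply: PQ_ext (PQ_add Hf Hn) => x; by rewrite -max_neg.
Qed.

Lemma PQ_pos_apos (R : realType) (a b c : R) : 0 < a ->
  PQ (fun x => Num.max (qv (a, b, c) x) 0).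
Proof.
move=> ha; rewrite /qv /=.
have hq := PQ_quad (a, b, c); rewrite /qv /= in hq.
case: (lerP (b ^+ 2 - 4 * a * c) 0) => hD.
  apply: PQ_ext hq => x; rewrite max_l //; have := sqr_ge0 (2 * a * x + b); nra.
set s := Num.sqrt (b ^+ 2 - 4 * a * c).
have hs : 0 < s by rewrite sqrtr_gt0.
have hss : s ^+ 2 = b ^+ 2 - 4 * a * c by rewrite sqr_sqrtr // ltW.
have ha0 : a != 0 by rewrite gt_eqF.
set r1 := (- b - s) / (2 * a); set r2 := (- b + s) / (2 * a).
have h1 : 2 * a * r1 = - b - s by rewrite /r1; field.
have h2 : 2 * a * r2 = - b + s by rewrite /r2; field.
have h12 : r1 < r2 by nra.
have H4 : forall x, 4 * a * (a * x ^+ 2 + b * x + c) = (2 * a * x + b - s) * (2 * a * x + b + s).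
  move=> x; have -> : (2 * a * x + b - s) * (2 * a * x + b + s) = (2 * a * x + b) ^+ 2 - s ^+ 2 by ring.
  rewrite hss; ring.
apply: (PQ_ext (f := fun x => (a * x ^+ 2 + b * x + c)
         - ind R (r1 < x) * (a * x ^+ 2 + b * x + c)
         + ind R (r2 < x) * (a * x ^+ 2 + b * x + c))); last first.
  by apply: PQ_add; [apply: PQ_sub => //; apply: PQ_ind | apply: PQ_ind].
move=> x; have := H4 x; set h := a * x ^+ 2 + b * x + c => H4x.
case: (lerP x r1) => hx1.
  have hx2 : ~~ (r2 < x) by rewrite -leNgt; apply: le_trans (ltW h12).
  rewrite (@indF R _ hx2); rewrite /ind /= mul0r !subr0 addr0 max_l //.
  have : 2 * a * x + b + s <= 0 by nra.
  nra.
case: (lerP x r2) => hx2.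
  rewrite /ind /= mul0r mul1r addr0 subrr max_r //.
  have : 0 <= 2 * a * x + b + s by nra.
  have : 2 * a * x + b - s <= 0 by nra.
  nra.
rewrite /ind /= !mul1r subrr add0r max_l //.
have : 0 <= 2 * a * x + b - s by nra.
nra.
Qed.

Lemma PQ_pos_lin (R : realType) (b c : R) : 0 < b ->
  PQ (fun x => Num.max (qv (0, b, c) x) 0).
Proof.
move=> hb; rewrite /qv /=.
have hq := PQ_quad (0, b, c); rewrite /qv /= in hq.
set r := - c / b.
have hr : b * r = - c by rewrite /r; field; rewrite gt_eqF.
apply: (PQ_ext (f := fun x => ind R (r < x) * (0 * x ^+ 2 + b * x + c))); last first.
  by apply: PQ_ind.
move=> x; case: (lerP x r) => hx.
  rewrite /ind /= mul0r max_r //; nra.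
rewrite /ind /= mul1r max_l //; nra.
Qed.

Lemma PQ_pos_quad (R : realType) (q : R * R * R) :
  PQ (fun x => Num.max (qv q x) 0).
Proof.
case: q => [[a b] c].
have Hn : forall a b c : R, PQ (fun x => Num.max (qv (- a, - b, - c) x) 0) ->
    PQ (fun x => Num.max (qv (a, b, c) x) 0).
  move=> a' b' c' H; apply: PQ_pos_neg; first exact: PQ_quad.
  apply: PQ_ext H => x; congr (Num.max _ _); rewrite /qv /=; ring.
case: (ltrgtP a 0) => ha.
- by apply: Hn; apply: PQ_pos_apos; rewrite oppr_gt0.
- exact: PQ_pos_apos.
rewrite ha; case: (ltrgtP b 0) => hb.
- by apply: Hn; rewrite oppr0; apply: PQ_pos_lin; rewrite oppr_gt0.
- exact: PQ_pos_lin.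
rewrite hb; case: (lerP 0 c) => hc.
  apply: PQ_ext (PQ_quad (0, 0, c)) => x; rewrite max_l //; rewrite /qv /=; lra.
apply: PQ_ext (PQ_const 0) => x; rewrite max_r //; rewrite /qv /=; lra.
Qed.

Lemma PQ_max_quad (R : realType) (q : R * R * R) (C : R) :
  PQ (fun x => Num.max (qv q x) C).
Proof.
apply: PQ_ext (PQ_add (PQ_const C) (PQ_pos_quad (q.1.1, q.1.2, q.2 - C))) => x.
rewrite /= [RHS]max_shift; congr (_ + Num.max _ _); rewrite /qv /=; ring.
Qed.


Definition dle {R : realType} : rel (R * (R * R * R)) := fun u v => v.1 <= u.1.

Lemma dle_trans (R : realType) : transitive (@dle R).
Proof. move=> v u w h1 h2; rewrite /dle in h1 h2 *; exact: le_trans h2 h1. Qed.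

Lemma dle_total (R : realType) : total (@dle R).
Proof. move=> u v; rewrite /dle; exact: le_total. Qed.

Definition qsum {R : realType} (q0 : R * R * R) (L : seq (R * (R * R * R))) :=
  foldr (fun u acc => qadd acc u.2) q0 L.

Lemma PQf_cons (R : realType) q0 (u : R * (R * R * R)) L x :
  PQf q0 (u :: L) x = PQf q0 L x + ind R (u.1 < x) * qv u.2 x.
Proof. rewrite /PQf big_cons; ring. Qed.

Lemma PQf_big (R : realType) q0 (L : seq (R * (R * R * R))) x :
  all (fun u => u.1 < x) L -> PQf q0 L x = qv (qsum q0 L) x.
Proof.
elim: L => [|u L IH] /=; first by rewrite /PQf big_nil addr0.
case/andP => hu hL; rewrite PQf_cons IH // qvD indT // mul1r //.
Qed.

Lemma PQ_max_sorted (R : realType) (L : seq (R * (R * R * R))) :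
  sorted dle L -> forall q0 C, PQ (fun x => Num.max (PQf q0 L x) C).
Proof.
elim: L => [|u L IH] /= hs q0 C.
  apply: PQ_ext (PQ_max_quad q0 C) => x; by rewrite /PQf big_nil addr0.
move: hs; rewrite path_sortedE; last exact: dle_trans.
case/andP => hall hsL.
apply: (PQ_ext (f := fun x => (1 - ind R (u.1 < x)) * Num.max (PQf q0 L x) C
    + ind R (u.1 < x) * Num.max (qv (qadd (qsum q0 L) u.2) x) C)); last first.
  by apply: PQ_add; [apply: PQ_ind_le; apply: IH | apply: PQ_ind; apply: PQ_max_quad].
move=> x; rewrite PQf_cons; case: (ltrP u.1 x) => hx.
  rewrite /ind /= subrr mul0r add0r !mul1r PQf_big ?qvD //.
  apply: sub_all hall => v; rewrite /dle => hv; exact: le_lt_trans hv hx.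
by rewrite /ind /= !mul0r subr0 mul1r !addr0.
Qed.

Lemma PQ_sort (R : realType) (g : R -> R) : PQ g ->
  exists q0 L, sorted dle L /\ forall x, g x = PQf q0 L x.
Proof.
move=> [q0 [L H]]; exists q0, (sort dle L); split.
  apply: sort_sorted; exact: dle_total.
move=> x; rewrite H /PQf; congr (_ + _); apply: perm_big.
by rewrite perm_sym perm_sort.
Qed.

Lemma PQ_max (R : realType) (g : R -> R) (C : R) : PQ g -> PQ (fun x => Num.max (g x) C).
Proof.
move=> /PQ_sort [q0 [L [hs H]]].
apply: PQ_ext (PQ_max_sorted hs q0 C) => x; by rewrite H.
Qed.


Lemma PQ_pw_sorted (R : realType) (L : seq (R * (R * R * R))) :
  sorted dle L -> forall q0, exists m (xs : nat -> \bar R) (a b c : nat -> R),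
  [/\ xs 0%N = -oo%E, xs m.+1 = +oo%E,
      (forall i, (i <= m)%N -> (xs i <= xs i.+1)%E),
      (forall x, PQf q0 L x = \sum_(1 <= i < m.+2)
          ind R ((xs i.-1 < x%:E)%E && (x%:E <= xs i)%E) *
          (a i * x ^+ 2 + b i * x + c i)) &
      forall T, all (fun u => u.1 <= T) L -> forall i, (i <= m)%N -> (xs i <= T%:E)%E].
Proof.
elim: L => [|u L IH] /= hs q0.
  exists 0%N, (fun i => if i == 0%N then -oo%E else +oo%E),
    (fun _ => q0.1.1), (fun _ => q0.1.2), (fun _ => q0.2); split => //.
  - by move=> i; rewrite leqn0 => /eqP ->.
  - move=> x; rewrite big_nat1 /= /PQf big_nil addr0 indT ?mul1r //.
    by rewrite leey andbT ltNye.
  - by move=> T _ i; rewrite leqn0 => /eqP ->; rewrite /= leNye.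
move: hs; rewrite path_sortedE; last exact: dle_trans.
case/andP => hall hsL.
have [m [xs [a [b [c [h0 hm hmono hsum hinv]]]]]] := IH hsL q0.
have hxm : (xs m <= (u.1)%:E)%E by apply: hinv.
exists m.+1, (fun i => if (i <= m)%N then xs i else if i == m.+1 then (u.1)%:E else +oo%E),
  (fun i => if (i <= m.+1)%N then a i else a m.+1 + u.2.1.1),
  (fun i => if (i <= m.+1)%N then b i else b m.+1 + u.2.1.2),
  (fun i => if (i <= m.+1)%N then c i else c m.+1 + u.2.2); split.
- by [].
- by rewrite /= !ifF //; lia.
- move=> i hi /=; have : ((i < m)%N \/ i = m \/ i = m.+1) by lia.
  case=> [him|[->|->]].
  + have -> : (i <= m)%N = true by lia.
    have -> : (i.+1 <= m)%N = true by lia.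
    by apply: hmono; lia.
  + rewrite leqnn.
    have -> : (m.+1 <= m)%N = false by lia.
    by rewrite eqxx.
  + have -> : (m.+1 <= m)%N = false by lia.
    have -> : (m.+2 <= m)%N = false by lia.
    have -> : (m.+2 == m.+1) = false by lia.
    by rewrite eqxx leey.
- move=> x; rewrite PQf_cons hsum.
  rewrite big_nat_recr //= [in RHS]big_nat_recr //= [in RHS]big_nat_recr //=.
  rewrite -addrA -addrA; congr (_ + _).
    apply: eq_big_nat => i /andP [hi1 hi2].
    by rewrite !ifT //; lia.
  rewrite hm leqnn ltnn eqxx ltnSn.
  have -> : (m.+1 < m)%N = false by lia.
  have -> : (m.+2 == m.+1) = false by lia.
  rewrite leey !andbT lte_fin lee_fin.
  case: (ltrP u.1 x) => hx.
    have -> : (xs m < x%:E)%E by apply: le_lt_trans hxm _; rewrite lte_fin.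
    rewrite /ind /= ltnn /qv; ring.
  rewrite /ind /= andbT ltnn /qv; ring.
- move=> T /= /andP [huT hLT] i hi.
  case: (leqP i m) => him; first by apply: le_trans (hinv _ hLT _ him) _; rewrite lee_fin.
  have -> : i = m.+1 by lia.
  by rewrite eqxx lee_fin.
Qed.


Lemma PQ_pw (R : realType) (g : R -> R) : PQ g -> piecewise_quadratic g.
Proof.
move=> /PQ_sort [q0 [L [hs H]]].
have [m [xs [a [b [c [h0 hm hmono hsum _]]]]]] := PQ_pw_sorted hs q0.
exists m, xs, a, b, c; split => // x; by rewrite H hsum.
Qed.

Lemma NS_ps (R : realType) (g : R -> R) : NS g -> positive_spikes g.
Proof.
move=> [L [hL H]].
set L' := [seq u <- L | 0 < u.2].
exists (size L'), (fun i => (nth (0, 0) L' i.-1).1), (fun i => (nth (0, 0) L' i.-1).2).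
split.
  move=> i /andP [hi1 hi2].
  have hi : (i.-1 < size L')%N by move: hi1 hi2; clear; lia.
  have : nth (0, 0) L' i.-1 \in L' by apply: mem_nth.
  by rewrite mem_filter => /andP [].
move=> x; rewrite H.
have -> : \sum_(u <- L) u.2 * ind R (x == u.1) = \sum_(u <- L') u.2 * ind R (x == u.1).
  rewrite big_filter [RHS]big_mkcond; apply: eq_big_seq => u hu /=.
  case: ifP => // hpos.
  have : 0 <= u.2 by move/allP: hL => /(_ u hu).
  rewrite le_eqVlt hpos orbF => /eqP <-; by rewrite mul0r.
rewrite (big_nth (0, 0)) big_add1 /=.
by [].
Qed.

Lemma GG_F (R : realType) (g : R -> R) : GG g -> classF g.
Proof.
move=> [Q [S [hQ hS H]]]; exists Q, S; split => //; [exact: PQ_pw | exact: NS_ps].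
Qed.


Lemma GG_ext (R : realType) (f g : R -> R) : (forall x, f x = g x) -> GG f -> GG g.
Proof. by move=> e [Q [S [hQ hS H]]]; exists Q, S; split => // x; rewrite -e. Qed.

Lemma GG_add (R : realType) (f g : R -> R) : GG f -> GG g -> GG (fun x => f x + g x).
Proof.
move=> [Q1 [S1 [hQ1 [L1 [hL1 H1]] e1]]] [Q2 [S2 [hQ2 [L2 [hL2 H2]] e2]]].
exists (fun x => Q1 x + Q2 x), (fun x => S1 x + S2 x); split.
- exact: PQ_add.
- exists (L1 ++ L2); split; first by rewrite all_cat hL1 hL2.
  by move=> x; rewrite big_cat H1 H2.
- move=> x; rewrite e1 e2; ring.
Qed.

Lemma GG_e (R : realType) (ybar : nat -> R) (n : nat -> nat) (lam0 : R) i :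
  0 <= lam0 -> GG (efun ybar n lam0 i).
Proof.
move=> h0.
exists (qv (- ((n i)%:R / 2), (n i)%:R * ybar i, - ((n i)%:R / 2) * ybar i ^+ 2)),
  (fun x => lam0 * ind R (x == 0)); split.
- exact: PQ_quad.
- exists [:: (0, lam0)]; split; first by rewrite /= h0.
  by move=> x; rewrite big_cons big_nil addr0.
- by move=> x; rewrite /efun /qv /=; field.
Qed.

Lemma NS_ge0 (R : realType) (S : R -> R) : NS S -> forall x, 0 <= S x.
Proof.
move=> [L [hL H]] x; rewrite H big_seq; apply: sumr_ge0 => u hu.
apply: mulr_ge0; first by move/allP: hL => /(_ u hu).
by rewrite /ind ler0n.
Qed.

Lemma max_mono (R : realType) (x y C : R) : x <= y -> Num.max x C <= Num.max y C.
Proof.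
move=> h; case/orP: (le_total x C) => h1; case/orP: (le_total y C) => h2;
  rewrite ?(max_l h1) ?(max_r h1) ?(max_l h2) ?(max_r h2) //; lra.
Qed.

Lemma GG_max (R : realType) (g : R -> R) (C : R) : GG g -> GG (fun x => Num.max (g x) C).
Proof.
move=> [Q [S [hQ hS H]]].
have hS0 := NS_ge0 hS.
case: (hS) => [LS [hLS HS]].
set S' := fun x => Num.max (g x) C - Num.max (Q x) C.
exists (fun x => Num.max (Q x) C), S'; split.
- exact: PQ_max.
- set D := undup [seq u.1 | u <- LS].
  exists [seq (c, S' c) | c <- D]; split.
    apply/allP => u /mapP [c _ ->] /=; rewrite /S' subr_ge0; apply: max_mono.
    by rewrite H lerDl.
  move=> x; rewrite big_map.
  case: (boolP (x \in D)) => hx.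
    rewrite (bigD1_seq x) //=; last exact: undup_uniq.
    rewrite eqxx /ind /= mulr1 big1 ?addr0 // => c hc.
    by rewrite eq_sym (negbTE hc) mulr0.
  rewrite big1_seq; last first.
    move=> c /andP [_ hc]; have : x != c by apply/eqP => e; move: hx; rewrite e hc.
    by move/negbTE => ->; rewrite mulr0.
  have hSx : S x = 0.
    rewrite HS big1_seq // => u /andP [_ hu].
    have : x != u.1.
      apply/eqP => e; move: hx; rewrite /D mem_undup e; case/negP; exact: map_f.
    by move/negbTE => ->; rewrite mulr0.
  by rewrite /S' H hSx addr0 subrr.
- by move=> x; rewrite /S'; ring.
Qed.


Lemma fstep_eq (R : realType) (lam M : R) (g : R -> R) :
  0 <= lam -> (forall x, g x <= M) ->
  forall b, fstep lam g b = Num.max (g b) (sup (range g) - lam).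
Proof.
move=> hl hM b; rewrite /fstep.
set E := range (fun bt => g bt - lam * ind R (b != bt)).
have hgub : has_ubound (range g) by exists M => _ [x _ <-]; exact: hM.
have hg0 : (range g !=set0)%classic by exists (g b), b.
have hgs : forall x, g x <= sup (range g) by move=> x; apply: ub_le_sup => //; exists x.
have hEub : has_ubound E.
  exists M => _ [x _ <-]; have := hM x; have : 0 <= lam * ind R (b != x).
    by apply: mulr_ge0 => //; rewrite /ind ler0n.
  lra.
have hE0 : (E !=set0)%classic by exists (g b), b => //; rewrite eqxx /ind mulr0 subr0.
have hbE : g b <= sup E by apply: ub_le_sup => //; exists b => //; rewrite eqxx /ind mulr0 subr0.
have hsE : sup (range g) - lam <= sup E.
  rewrite lerBlDr; apply: ge_sup => // _ [x _ <-].
  have : g x - lam * ind R (b != x) <= sup E by apply: ub_le_sup => //; exists x.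
  have : lam * ind R (b != x) <= lam.
    by case: (b != x); rewrite /ind ?mulr1 ?mulr0.
  lra.
apply/eqP; rewrite eq_le; apply/andP; split.
  apply: ge_sup => // _ [x _ <-].
  case: (eqVneq b x) => [<-|hbx].
    rewrite /ind /= mulr0 subr0; case/orP: (le_total (g b) (sup (range g) - lam)) => h;
      rewrite ?(max_l h) ?(max_r h) //.
  rewrite /ind /= mulr1; have := hgs x.
  case/orP: (le_total (g b) (sup (range g) - lam)) => h;
      rewrite ?(max_l h) ?(max_r h) //; lra.
case/orP: (le_total (g b) (sup (range g) - lam)) => h;
  by rewrite ?(max_l h) ?(max_r h).
Qed.

Lemma fstep_le (R : realType) (lam M : R) (g : R -> R) :
  0 <= lam -> (forall x, g x <= M) -> forall b, fstep lam g b <= M.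
Proof.
move=> hl hM b; rewrite (fstep_eq hl hM).
have : sup (range g) <= M.
  by apply: ge_sup; [exists (g b), b | move=> _ [x _ <-]; exact: hM].
case/orP: (le_total (g b) (sup (range g) - lam)) => h;
  rewrite ?(max_l h) ?(max_r h) ?hM //; lra.
Qed.

Lemma delta_main (R : realType) (ybar : nat -> R) (n : nat -> nat) (lam0 lam : R) :
  0 <= lam0 -> 0 <= lam -> forall k, (1 <= k)%N ->
  GG (delta ybar n lam0 lam k) /\ exists M, forall x, delta ybar n lam0 lam k x <= M.
Proof.
move=> h0 hl; elim => [//|k IH] _.
have he : forall i x, efun ybar n lam0 i x <= lam0.
  move=> i x; rewrite /efun; have := sqr_ge0 (x - ybar i).
  have : 0 <= (n i)%:R / 2 :> R by apply: divr_ge0; rewrite ler0n.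
  have : lam0 * ind R (x == 0) <= lam0 by case: (x == 0); rewrite /ind ?mulr1 ?mulr0.
  nra.
case: k IH => [|k] IH.
  split; first exact: GG_e.
  by exists lam0 => x; exact: he.
have [hG [M hM]] := IH isT.
split.
  apply: (GG_ext (f := fun x => efun ybar n lam0 k.+2 x +
      Num.max (delta ybar n lam0 lam k.+1 x) (sup (range (delta ybar n lam0 lam k.+1)) - lam))).
    by move=> x; rewrite [RHS]/= (fstep_eq hl hM).
  apply: GG_add; first exact: GG_e.
  exact: GG_max.
exists (lam0 + M) => x /=; apply: lerD; first exact: he.
exact: fstep_le.
Qed.


Unset Implicit Arguments. Set Strict Implicit.
Theorem lemmaA1 (R : realType) (p : nat) (ybar : nat -> R) (n : nat -> nat)
  (lam0 lam : R) :
  (1 <= p)%N ->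
  (forall i, (1 <= i <= p)%N -> (1 <= n i)%N) ->
  0 <= lam0 -> 0 <= lam ->
  (forall k, (1 <= k <= p)%N -> classF (delta ybar n lam0 lam k)) /\
  (forall k, (2 <= k <= p)%N -> classF (fk ybar n lam0 lam k)).
Proof.
move=> _ _ h0 hl; split.
  move=> k /andP [hk _]; apply: GG_F; exact: (delta_main ybar n h0 hl hk).1.
move=> k /andP [hk _]; rewrite /fk.
have hk1 : (1 <= k.-1)%N by case: k hk => [|[|k]].
have [hG [M hM]] := delta_main ybar n h0 hl hk1.
apply: GG_F; apply: GG_ext (GG_max _ hG) => x; by rewrite (fstep_eq hl hM).
Qed.
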